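(* Let $\mathcal{X}$ and $\mathcal{Y}$ be finite sets, let $\Pr$ be a probability distribution on $\mathcal{X}$, let $\delta:\mathcal{X}\times\mathcal{Y}\to\mathbb{R}$, and let $\bar\pi,\pi_1,\dots,\pi_m$ be stochastic policies, each $\pi_i$ having support for $\bar\pi$ and satisfying $\sigma^2_\delta(\bar\pi\|\pi_i)>0$. Let $\mathcal{D}=\bigcup_{i=1}^m\mathcal{D}^i$ be a log dataset in which, for each $i$, $\mathcal{D}^i$ consists of $n_i\ge1$ samples $(x^i_j,y^i_j,\delta^i_j,p^i_j)$ with $x^i_j\sim\Pr$, $y^i_j\sim\pi_i(\cdot\mid x^i_j)$, $\delta^i_j=\delta(x^i_j,y^i_j)$, $p^i_j=\pi_i(y^i_j\mid x^i_j)$, all draws independent; let $n=\sum_in_i$. Define $$\hat U_{naive}(\bar\pi)=\frac1n\sum_{i=1}^m\sum_{j=1}^{n_i}\frac{\delta^i_j\bar\pi(y^i_j\mid x^i_j)}{p^i_j},\qquad \hat U_{weight}(\bar\pi)=\sum_{i=1}^m\lambda_i^*\sum_{j=1}^{n_i}\frac{\delta^i_j\bar\pi(y^i_j\mid x^i_j)}{p^i_j},$$ where $\lambda_i^*=\Big(\sigma^2_\delta(\bar\pi\|\pi_i)\sum_{j=1}^m\frac{n_j}{\sigma^2_\delta(\bar\pi\|\pi_j)}\Big)^{-1}$. Let $v_i=\sigma^2_\delta(\bar\pi\|\pi_i)/\sigma^2_\delta(\bar\pi\|\pi_m)$ and $r_i=n_i/n_m$. Then $$\gamma:=\frac{\mathrm{Var}_{\mathcal{D}}[\hat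 U_{weight}(\bar\pi)]}{\mathrm{Var}_{\mathcal{D}}[\hat U_{naive}(\bar\pi)]}=\frac{\big(\sum_{i=1}^m r_i\big)^2}{\big(\sum_{i=1}^m r_iv_i\big)\big(\sum_{i=1}^m \frac{r_i}{v_i}\big)}\le1.$$
   Context: A stochastic policy $\pi$ assigns to each $x\in\mathcal{X}$ a probability distribution $\pi(\cdot\mid x)$ on $\mathcal{Y}$. The utility is $U(\pi)=\sum_{x,y}\Pr(x)\pi(y\mid x)\delta(x,y)$. A policy $\pi$ has support for $\pi'$ if $\delta(x,y)\pi'(y\mid x)\neq0$ implies $\pi(y\mid x)>0$ for all $x,y$. For $\pi$ having support for $\bar\pi$, the divergence is $\sigma^2_\delta(\bar\pi\|\pi)=\mathrm{Var}_{x\sim\Pr,\,y\sim\pi(\cdot\mid x)}\big[\delta(x,y)\bar\pi(y\mid x)/\pi(y\mid x)\big]=\sum_{x,y}\frac{(\delta(x,y)\bar\pi(y\mid x))^2}{\pi(y\mid x)}\Pr(x)-U(\bar\pi)^2$. Variances are over the random draw of $\mathcal{D}$. *)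

(* Defs.v *)
From HB Require Import structures.
From mathcomp Require Import all_boot all_order all_algebra.
From mathcomp Require Import reals.
Set Implicit Arguments. Unset Strict Implicit. Unset Printing Implicit Defensive.
Import Order.TTheory GRing.Theory Num.Theory.
Local Open Scope ring_scope.

Section Defs.
Variables (R : realType) (X Y : finType).

(* A stochastic policy: pol x y = pi(y | x). *)
Definition is_policy (pol : X -> Y -> R) : Prop :=
  (forall x y, 0 <= pol x y) /\ (forall x, \sum_(y : Y) pol x y = 1).

Definition is_distr (Pr : X -> R) : Prop :=
  (forall x, 0 <= Pr x) /\ \sum_(x : X) Pr x = 1.

Definition utility (Pr : X -> R) (delta : X -> Y -> R) (pol : X -> Y -> R) : R :=
  \sum_(x : X) \sum_(y : Y) Pr x * pol x y * delta x y.

Definition has_support (delta : X -> Y -> R) (pol pol' : X -> Y -> R) : Prop :=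
  forall x y, delta x y * pol' x y != 0 -> 0 < pol x y.

Definition divergence (Pr : X -> R) (delta : X -> Y -> R)
    (pbar pol : X -> Y -> R) : R :=
  \sum_(x : X) \sum_(y : Y) (delta x y * pbar x y) ^+ 2 / pol x y * Pr x
  - utility Pr delta pbar ^+ 2.

Definition sidx (m : nat) (n : 'I_m -> nat) : finType := {i : 'I_m & 'I_(n i)}.

(* A log dataset: the (x, y) drawn for each sample (i,j); delta^i_j and p^i_j
   are determined by (x, y) and i. *)
Definition dataset (m : nat) (n : 'I_m -> nat) : finType :=
  {ffun sidx n -> (X * Y)%type}.

Definition sample (m : nat) (n : 'I_m -> nat) (d : dataset n) (i : 'I_m)
  (j : 'I_(n i)) : X * Y := d (existT (fun i => 'I_(n i)) i j).

Definition prob_dataset (m : nat) (n : 'I_m -> nat) (Pr : X -> R)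
    (pol : 'I_m -> X -> Y -> R) (d : dataset n) : R :=
  \prod_(k : sidx n) (Pr (d k).1 * pol (tag k) (d k).1 (d k).2).

Definition expect (m : nat) (n : 'I_m -> nat) (Pr : X -> R)
    (pol : 'I_m -> X -> Y -> R) (f : dataset n -> R) : R :=
  \sum_(d : dataset n) prob_dataset Pr pol d * f d.

Definition variance (m : nat) (n : 'I_m -> nat) (Pr : X -> R)
    (pol : 'I_m -> X -> Y -> R) (f : dataset n -> R) : R :=
  expect Pr pol (fun d => (f d - expect Pr pol f) ^+ 2).

Definition ips_term (m : nat) (n : 'I_m -> nat) (delta : X -> Y -> R)
    (pbar : X -> Y -> R) (pol : 'I_m -> X -> Y -> R) (d : dataset n)
    (i : 'I_m) (j : 'I_(n i)) : R :=
  let s := sample d j in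
  delta s.1 s.2 * pbar s.1 s.2 / pol i s.1 s.2.

Definition U_naive (m : nat) (n : 'I_m -> nat) (delta : X -> Y -> R)
    (pbar : X -> Y -> R) (pol : 'I_m -> X -> Y -> R) (d : dataset n) : R :=
  (\sum_(i < m) (n i)%:R)^-1 *
  \sum_(i < m) \sum_(j < n i) ips_term delta pbar pol d j.

Definition lambda_star (m : nat) (n : 'I_m -> nat) (Pr : X -> R)
    (delta : X -> Y -> R) (pbar : X -> Y -> R) (pol : 'I_m -> X -> Y -> R)
    (i : 'I_m) : R :=
  (divergence Pr delta pbar (pol i) *
   \sum_(j < m) (n j)%:R / divergence Pr delta pbar (pol j))^-1.

Definition U_weight (m : nat) (n : 'I_m -> nat) (Pr : X -> R)
    (delta : X -> Y -> R) (pbar : X -> Y -> R) (pol : 'I_m -> X -> Y -> R)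
    (d : dataset n) : R :=
  \sum_(i < m) lambda_star n Pr delta pbar pol i *
    \sum_(j < n i) ips_term delta pbar pol d j.

End Defs.

Arguments U_naive {R X Y m} n delta pbar pol d.
Arguments U_weight {R X Y m} n Pr delta pbar pol d.
Arguments variance {R X Y m} n Pr pol f.
Arguments expect {R X Y m} n Pr pol f.

(* Main.v *)
Require Import Defs.
From HB Require Import structures.
From mathcomp Require Import all_boot all_order all_algebra.
From mathcomp Require Import reals ring lra.
Import Order.TTheory GRing.Theory Num.Theory.
Local Open Scope ring_scope.
Section Gen.
Variables (R : realType) (I J : finType) (p : I -> J -> R).
Hypothesis p1 : forall i, \sum_j p i j = 1.

Definition Ex (F : {ffun I -> J} -> R) : R :=
  \sum_(f : {ffun I -> J}) (\prod_i p i (f i)) * F f.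

Lemma Ex_ext F G : (forall f, F f = G f) -> Ex F = Ex G.
Proof. by move=> H; apply: eq_bigr => f _; rewrite H. Qed.

Lemma Ex_prod q : Ex (fun f => \prod_i q i (f i)) = \prod_i \sum_j p i j * q i j.
Proof.
rewrite /Ex bigA_distr_bigA; apply: eq_bigr => f _; by rewrite -big_split.
Qed.

Lemma Ex_one k h : Ex (fun f => h (f k)) = \sum_j p k j * h j.
Proof.
pose q i j := if i == k then h j else 1.
have E : forall f : {ffun I -> J}, h (f k) = \prod_i q i (f i).
  move=> f; rewrite (bigD1 k) //= /q eqxx big1 ?mulr1 // => i /negbTE -> //.
rewrite (Ex_ext _ _ E) Ex_prod.
rewrite (bigD1 k) //= /q eqxx [X in _ * X]big1 ?mulr1 // => i /negbTE ->.
under eq_bigr do rewrite mulr1; exact: p1.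
Qed.

Lemma Ex_two k l h g : k != l ->
  Ex (fun f => h (f k) * g (f l)) = (\sum_j p k j * h j) * (\sum_j p l j * g j).
Proof.
move=> kl.
pose q i j := if i == k then h j else if i == l then g j else 1.
have qk : forall j, q k j = h j by move=> j; rewrite /q eqxx.
have ql : forall j, q l j = g j by move=> j; rewrite /q eq_sym (negbTE kl) eqxx.
have Hr : forall (F : I -> R), (forall i, i != k -> i != l -> F i = 1) ->
   \prod_i F i = F k * F l.
  move=> F HF; rewrite (bigD1 k) //= (bigD1 l) /=; last by rewrite eq_sym kl.
  rewrite [X in _ * (_ * X)]big1 ?mulr1 // => i /andP [il ik]; exact: HF.
have E : forall f : {ffun I -> J}, h (f k) * g (f l) = \prod_i q i (f i).
  move=> f; rewrite (Hr (fun i => q i (f i))) ?qk ?ql //.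
  by move=> i /negbTE ik /negbTE il; rewrite /q ik il.
rewrite (Ex_ext _ _ E) Ex_prod.
rewrite (Hr (fun i => \sum_j p i j * q i j)).
  by under eq_bigr do rewrite qk; under [X in _ * X]eq_bigr do rewrite ql.
move=> i /negbTE ik /negbTE il; rewrite /q ik il.
under eq_bigr do rewrite mulr1; exact: p1.
Qed.

Lemma Ex_sum (K : finType) (F : K -> {ffun I -> J} -> R) :
  Ex (fun f => \sum_k F k f) = \sum_k Ex (F k).
Proof.
rewrite /Ex; under eq_bigr do rewrite mulr_sumr; exact: exchange_big.
Qed.


Lemma Ex_lin (c : I -> R) (g : I -> J -> R) :
  Ex (fun f => \sum_i c i * g i (f i)) = \sum_i c i * \sum_j p i j * g i j.
Proof.
rewrite Ex_sum; apply: eq_bigr => i _.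
rewrite -Ex_one /Ex mulr_sumr; apply: eq_bigr => f _; by rewrite mulrCA.
Qed.

Lemma Ex_var (c : I -> R) (g : I -> J -> R) :
  Ex (fun f => (\sum_i c i * g i (f i) - Ex (fun f => \sum_i c i * g i (f i))) ^+ 2)
  = \sum_i c i ^+ 2 * \sum_j p i j * (g i j - \sum_j p i j * g i j) ^+ 2.
Proof.
set mu := fun i => \sum_j p i j * g i j.
rewrite Ex_lin.
pose h i j := c i * (g i j - mu i).
have E : forall f : {ffun I -> J},
  (\sum_i c i * g i (f i) - \sum_i c i * mu i) ^+ 2 =
  \sum_i \sum_l h i (f i) * h l (f l).
  move=> f; rewrite -sumrB expr2 mulr_suml; apply: eq_bigr => i _.
  rewrite mulr_sumr; apply: eq_bigr => l _; by rewrite /h !mulrBr.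
rewrite (Ex_ext _ _ E) Ex_sum; apply: eq_bigr => i _.
rewrite Ex_sum (bigD1 i) //= big1 ?addr0.
  rewrite (Ex_one i (fun j => h i j * h i j)) mulr_sumr; apply: eq_bigr => j _.
  by rewrite /h; rewrite -expr2 exprMn mulrCA.
move=> l li; rewrite Ex_two; last by rewrite eq_sym.
have -> : \sum_j p i j * h i j = 0.
  rewrite /h; under eq_bigr do rewrite mulrCA mulrBr; rewrite -mulr_sumr sumrB.
  by rewrite -mulr_suml p1 mul1r /mu subrr mulr0.
by rewrite mul0r.
Qed.
End Gen.
Arguments Ex {R I J} p F.
Arguments Ex_var {R I J p} p1 c g.
Lemma cs_ineq (R : realType) (I : finType) (nn s : I -> R) :
  (forall i, 0 < nn i) -> (forall i, 0 < s i) ->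
  (\sum_i nn i) ^+ 2 <= (\sum_i nn i / s i) * (\sum_i nn i * s i).
Proof.
move=> hn hs.
have E1 : (\sum_i nn i / s i) * (\sum_i nn i * s i) =
   \sum_i \sum_j (nn i / s i) * (nn j * s j) by rewrite big_distrlr.
have E2 : (\sum_i nn i / s i) * (\sum_i nn i * s i) =
   \sum_i \sum_j (nn i * s i) * (nn j / s j).
  by rewrite mulrC big_distrlr.
have E3 : (\sum_i nn i) ^+ 2 = \sum_i \sum_j nn i * nn j by rewrite expr2 big_distrlr.
have key : 0 <= \sum_i \sum_j nn i * nn j * (s i - s j) ^+ 2 / (s i * s j).
  apply: sumr_ge0 => i _; apply: sumr_ge0 => j _.
  apply: divr_ge0; last by apply: mulr_ge0; apply: ltW.
  apply: mulr_ge0; [apply: mulr_ge0; apply: ltW => // | exact: sqr_ge0].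
have E4 : \sum_i \sum_j nn i * nn j * (s i - s j) ^+ 2 / (s i * s j) =
  (\sum_i nn i / s i) * (\sum_i nn i * s i) + (\sum_i nn i / s i) * (\sum_i nn i * s i)
  - 2 * (\sum_i nn i) ^+ 2.
  rewrite {1}E1 E2 E3 -big_split /= mulr_sumr -sumrB; apply: eq_bigr => i _.
  rewrite -big_split /= mulr_sumr -sumrB; apply: eq_bigr => j _.
  have si := hs i; have sj := hs j.
  field; apply/andP; split; apply: lt0r_neq0 => //.
rewrite E4 in key; lra.
Qed.

Lemma sum_sig (R : realType) m (n : 'I_m -> nat) (G : sidx n -> R) :
  \sum_(i < m) \sum_(j < n i) G (existT (fun i => 'I_(n i)) i j) = \sum_(k : sidx n) G k.
Proof.
rewrite (sig_big_dep xpredT (fun _ => xpredT) (fun i j => G (existT (fun i => 'I_(n i)) i j))).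
by apply: eq_bigr => -[i j].
Qed.

Lemma sum_tag (R : realType) m (n : 'I_m -> nat) (F : 'I_m -> R) :
  \sum_(k : sidx n) F (tag k) = \sum_i (n i)%:R * F i.
Proof.
rewrite -sum_sig; apply: eq_bigr => i _.
by rewrite /= sumr_const card_ord mulr_natl.
Qed.

Arguments sum_tag {R m n} F.
Arguments sum_sig {R m n} G.

Lemma sum_pos (R : realType) m (F : 'I_m.+1 -> R) :
  (forall i, 0 < F i) -> 0 < \sum_i F i.
Proof.
move=> hF; rewrite (bigD1 ord0) //=.
have h1 : 0 <= \sum_(i | i != ord0) F i by apply: sumr_ge0 => i _; apply: ltW.
have := hF ord0; lra.
Qed.

(* Policies pi_1..pi_m are indexed by 'I_m.+1 (so m >= 1); pi_m is ord_max. *)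
Theorem proposition6p5 (R : realType) (X Y : finType) (m : nat)
  (n : 'I_m.+1 -> nat) (Pr : X -> R) (delta : X -> Y -> R)
  (pbar : X -> Y -> R) (pol : 'I_m.+1 -> X -> Y -> R) :
  is_distr Pr -> is_policy pbar ->
  (forall i, is_policy (pol i)) ->
  (forall i, has_support delta (pol i) pbar) ->
  (forall i, 0 < divergence Pr delta pbar (pol i)) ->
  (forall i, (0 < n i)%N) ->
  let v i := divergence Pr delta pbar (pol i) /
             divergence Pr delta pbar (pol ord_max) in
  let r i := (n i)%:R / (n ord_max)%:R : R in
  let gamma := variance n Pr pol (U_weight n Pr delta pbar pol) /
               variance n Pr pol (U_naive n delta pbar pol) in
  gamma = (\sum_(i < m.+1) r i) ^+ 2 /
          ((\sum_(i < m.+1) r i * v i) * (\sum_(i < m.+1) r i / v i))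
  /\ gamma <= 1.
Proof.
move=> hPr hpb hpol hsup hdiv hn v r gamma.
pose s i := divergence Pr delta pbar (pol i).
pose U := utility Pr delta pbar.
pose p (k : sidx n) (z : (X * Y)%type) := Pr z.1 * pol (tag k) z.1 z.2.
pose g (k : sidx n) (z : (X * Y)%type) := delta z.1 z.2 * pbar z.1 z.2 / pol (tag k) z.1 z.2.
have p1 : forall k, \sum_z p k z = 1.
  move=> k; rewrite -(pair_bigA _ (fun x y => Pr x * pol (tag k) x y)) /=.
  under eq_bigr do rewrite -mulr_sumr (hpol _).2 mulr1; exact hPr.2.
have hmean : forall k, \sum_z p k z * g k z = U.
  move=> k; rewrite -(pair_bigA _ (fun x y => p k (x,y) * g k (x,y))) /=.
  apply: eq_bigr => x _; apply: eq_bigr => y _; rewrite /p /g /=.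
  have e : Pr x * pbar x y * delta x y = Pr x * (delta x y * pbar x y) by ring.
  rewrite e.
  have [h0|h0] := eqVneq (pol (tag k) x y) 0.
    case: (eqVneq (delta x y * pbar x y) 0) => [hz|hnz]; last first.
      by have := hsup (tag k) x y hnz; rewrite h0 ltxx.
    by rewrite hz h0 !mulr0 mul0r.
  by field.
have hsq : forall k, \sum_z p k z * g k z ^+ 2 =
   \sum_(x : X) \sum_(y : Y) (delta x y * pbar x y) ^+ 2 / pol (tag k) x y * Pr x.
  move=> k; rewrite -(pair_bigA _ (fun x y => p k (x,y) * g k (x,y) ^+ 2)) /=.
  apply: eq_bigr => x _; apply: eq_bigr => y _; rewrite /p /g /=.
  have [h0|h0] := eqVneq (pol (tag k) x y) 0.
    by rewrite h0 invr0; ring.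
  by field.
have hvar : forall k, \sum_z p k z * (g k z - \sum_z p k z * g k z) ^+ 2 = s (tag k).
  move=> k; rewrite hmean.
  have e : forall z, p k z * (g k z - U) ^+ 2 =
     p k z * g k z ^+ 2 - (2 * U) * (p k z * g k z) + U ^+ 2 * p k z.
    by move=> z; ring.
  under eq_bigr do rewrite e.
  rewrite big_split sumrB /= -[\sum_z 2 * U * _]mulr_sumr -[\sum_z U ^+ 2 * _]mulr_sumr.
  rewrite hmean p1 hsq /s /divergence -/U; ring.
pose N : R := \sum_i (n i)%:R.
have eN : forall d : dataset X Y n, U_naive n delta pbar pol d = \sum_k N^-1 * g k (d k).
  move=> d; rewrite /U_naive mulr_sumr -sum_sig; apply: eq_bigr => i _.
  by rewrite mulr_sumr; apply: eq_bigr.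
pose lam i := lambda_star n Pr delta pbar pol i.
have eW : forall d : dataset X Y n, U_weight n Pr delta pbar pol d =
    \sum_k lam (tag k) * g k (d k).
  move=> d; rewrite /U_weight -sum_sig; apply: eq_bigr => i _.
  by rewrite mulr_sumr; apply: eq_bigr.
have VN : variance n Pr pol (U_naive n delta pbar pol) =
     \sum_i (n i)%:R * (N^-1 ^+ 2 * s i).
  have -> : variance n Pr pol (U_naive n delta pbar pol) = Ex p (fun d => (U_naive n delta pbar pol d - Ex p (U_naive n delta pbar pol)) ^+ 2) by [].
  rewrite (@Ex_ext _ _ _ p _ (fun d => (\sum_k N^-1 * g k (d k) -
      Ex p (fun d => \sum_k N^-1 * g k (d k))) ^+ 2)); last first.
    by move=> d; rewrite eN (@Ex_ext _ _ _ p _ _ eN).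
  rewrite (Ex_var p1); under eq_bigr do rewrite hvar.
  exact: (sum_tag (fun i => N^-1 ^+ 2 * s i)).
have VW : variance n Pr pol (U_weight n Pr delta pbar pol) =
     \sum_i (n i)%:R * (lam i ^+ 2 * s i).
  have -> : variance n Pr pol (U_weight n Pr delta pbar pol) = Ex p (fun d => (U_weight n Pr delta pbar pol d - Ex p (U_weight n Pr delta pbar pol)) ^+ 2) by [].
  rewrite (@Ex_ext _ _ _ p _ (fun d => (\sum_k lam (tag k) * g k (d k) -
      Ex p (fun d => \sum_k lam (tag k) * g k (d k))) ^+ 2)); last first.
    by move=> d; rewrite eW (@Ex_ext _ _ _ p _ _ eW).
  rewrite (Ex_var p1); under eq_bigr do rewrite hvar.
  exact: (sum_tag (fun i => lam i ^+ 2 * s i)).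
pose nn i : R := (n i)%:R.
have hnn : forall i, 0 < nn i by move=> i; rewrite /nn ltr0n.
have hs : forall i, 0 < s i := hdiv.
have hnn0 : forall i, nn i != 0 by move=> i; apply: lt0r_neq0.
have hs0 : forall i, s i != 0 by move=> i; apply: lt0r_neq0.
pose S := \sum_i nn i / s i.
pose A := \sum_i nn i * s i.
have hS : 0 < S by apply: sum_pos => i; apply: divr_gt0.
have hA : 0 < A by apply: sum_pos => i; apply: mulr_gt0.
have hN : 0 < N by apply: sum_pos.
have hS0 : S != 0 by apply: lt0r_neq0.
have hA0 : A != 0 by apply: lt0r_neq0.
have hN0 : N != 0 by apply: lt0r_neq0.
have hlam : forall i, lam i = (s i * S)^-1 by [].
have VW' : variance n Pr pol (U_weight n Pr delta pbar pol) = S^-1.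
  rewrite VW.
  have e : forall i, (n i)%:R * (lam i ^+ 2 * s i) = nn i / s i * (S ^+ 2)^-1.
    move=> i; rewrite hlam /nn; have := hs0 i; move: (s i) => si hsi; field.
    by rewrite hsi hS0.
  under eq_bigr do rewrite e.
  by rewrite -mulr_suml -/S; field.
have VN' : variance n Pr pol (U_naive n delta pbar pol) = N^-1 ^+ 2 * A.
  by rewrite VN; under eq_bigr do rewrite mulrCA; rewrite -mulr_sumr.
have hg : gamma = N ^+ 2 / (S * A).
  by rewrite /gamma VW' VN'; field; rewrite hN0 hS0 hA0.
have hr : \sum_i r i = N / nn ord_max by rewrite /r -mulr_suml.
have e1 : forall i, r i * v i = nn i * s i / (nn ord_max * s ord_max).
  move=> i; change (nn i / nn ord_max * (s i / s ord_max) = nn i * s i / (nn ord_max * s ord_max)).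
  by field; rewrite hnn0 hs0.
have hrv : \sum_i r i * v i = A / (nn ord_max * s ord_max).
  by under eq_bigr do rewrite e1; rewrite -mulr_suml.
have e2 : forall i, r i / v i = nn i / s i * (s ord_max / nn ord_max).
  move=> i; change (nn i / nn ord_max / (s i / s ord_max) = nn i / s i * (s ord_max / nn ord_max)).
  by field; rewrite hnn0 !hs0.
have hrv' : \sum_i r i / v i = S * (s ord_max / nn ord_max).
  by under eq_bigr do rewrite e2; rewrite -mulr_suml.
split.
  rewrite hg hr hrv hrv'; field.
  by rewrite hnn0 hs0 hS0 hA0.
rewrite hg ler_pdivrMr ?mul1r; last exact: mulr_gt0.
exact: cs_ineq.
Qed.
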